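(* Let $k\ge 2$ and let $p,q$ be real polynomials with $\deg p=k$, $\deg q=k-1$, whose roots are all real and simple and strictly interlace: $p_1<q_1<p_2<q_2<\dots<q_{k-1}<p_k$, where $p_1<\dots<p_k$ are the roots of $p$ and $q_1<\dots<q_{k-1}$ those of $q$. Then every root of the Wronskian $W(p,q)=p'q-q'p$ lies in the set $\Omega_p=\overline{D_0}\setminus\bigcup_{j=1}^{k-1}D_j$.
   Context: For $j=1,\dots,k-1$, $D_j\subset\mathbb{C}$ denotes the open disk whose boundary circle $C_j$ has the segment $[p_j,p_{j+1}]$ as a diameter (center $\frac{p_j+p_{j+1}}2$, radius $\frac{p_{j+1}-p_j}2$); $D_0$ denotes the open disk whose boundary circle $C_0$ has $[p_1,p_k]$ as a diameter; $\overline{D_0}$ is its closure. *)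

(* Defs.v *)
(* The complex plane is modelled by an arbitrary
   numeric closed field C (e.g. algC); its real elements (Num.real)
   form a real closed field. *)
From HB Require Import structures.
From mathcomp Require Export all_boot all_order all_algebra.
Set Implicit Arguments. Unset Strict Implicit. Unset Printing Implicit Defensive.
Export Order.TTheory GRing.Theory Num.Theory.
Local Open Scope ring_scope.

Definition in_open_diam_disk (C : numClosedFieldType) (a b z : C) : Prop :=
  `|z - (a + b) / 2%:R| < (b - a) / 2%:R.

Definition in_closed_diam_disk (C : numClosedFieldType) (a b z : C) : Prop :=
  `|z - (a + b) / 2%:R| <= (b - a) / 2%:R.

(* Omega_p for the sorted root list ps = [p_1; ...; p_k] (0-indexed):
   closure of D_0 minus the union of the open disks D_j, j = 1..k-1. *)
Definition Omega (C : numClosedFieldType) (ps : seq C) (z : C) : Prop :=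
  in_closed_diam_disk ps`_0 (last 0 ps) z /\
  (forall j : nat, (j < (size ps).-1)%N -> ~ in_open_diam_disk ps`_j ps`_j.+1 z).

Definition wronskian (C : numClosedFieldType) (p q : {poly C}) : {poly C} :=
  p^`() * q - q^`() * p.

(* Main.v *)
Set Warnings "-notation-overridden,-ambiguous-paths".
Require Import Defs.
From HB Require Import structures.
From mathcomp Require Import all_boot all_order all_algebra.
From Stdlib Require Import Ring.
Import Order.TTheory GRing.Theory Num.Theory.
Local Open Scope ring_scope.

Section Abs.
Variables (R : Type) (z o : R) (ad mu sb : R -> R -> R) (op : R -> R)
  (Rth : ring_theory z o ad mu sb op eq).
Add Ring AR : Rth.
Lemma idG (f u s y : R) : mu f (mu (sb u s) (ad (mu s u) (mu y y))) =
  ad (mu s (mu f (sb (mu u u) (mu y y)))) (mu (sb (mu y y) (mu s s)) (mu f u)).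
Proof. ring. Qed.
Lemma idSq (I u y : R) : mu I I = op o ->
  mu (sb u (mu I y)) (sb u (mu I y)) = ad (sb (mu u u) (mu y y)) (mu I (op (ad (mu u y) (mu u y)))).
Proof. move=> H. transitivity (ad (ad (sb (mu u u) (mu y y)) (mu I (op (ad (mu u y) (mu u y)))))
   (mu (ad (mu I I) o) (mu y y))); first ring. rewrite H. ring. Qed.
Lemma idFI (f a b I : R) : mu f (ad a (mu I b)) = ad (mu f a) (mu I (mu f b)).
Proof. ring. Qed.
Lemma idB (f u y : R) : mu f (ad (mu u y) (mu u y)) = mu (ad y y) (mu f u).
Proof. ring. Qed.
Lemma idDisk (x a b h y : R) : ad h h = o ->
  ad (mu (sb x (mu (ad a b) h)) (sb x (mu (ad a b) h))) (mu y y) =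
  ad (ad (mu (sb x a) (sb x b)) (mu y y)) (mu (mu (sb b a) h) (mu (sb b a) h)).
Proof. move=> H.
transitivity (ad (ad (ad (mu (sb x a) (sb x b)) (mu y y)) (mu (mu (sb b a) h) (mu (sb b a) h)))
  (mu (sb o (ad h h)) (sb (mu x (ad a b)) (mu (mu a b) (ad o (ad h h)))))); first ring.
rewrite H. ring. Qed.
Lemma idRect (x y p I : R) : sb (ad x (mu I y)) p = ad (sb x p) (mu I y).
Proof. ring. Qed.
Lemma idW (c r r' : R) : sb (mu (ad r (mu c r')) r) (mu r' (mu c r)) = mu r r.
Proof. ring. Qed.
End Abs.

Lemma Cring_th (C : comNzRingType) : @ring_theory C 0 1 +%R *%R (fun x y => x - y) -%R eq.
Proof.
split=> //; [exact: add0r|exact: addrC|exact: addrA|exact: mul1r|exact: mulrC|exact: mulrA|exact: mulrDl|exact: subrr].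
Qed.
Arguments idG {R z o ad mu sb op} Rth.
Arguments idSq {R z o ad mu sb op} Rth.
Arguments idFI {R z o ad mu sb op} Rth.
Arguments idB {R z o ad mu sb op} Rth.
Arguments idDisk {R z o ad mu sb op} Rth.
Arguments idRect {R z o ad mu sb op} Rth.
Arguments idW {R z o ad mu sb op} Rth.

Section Spec.
Variable C : comNzRingType.
Lemma idGC (f u s y : C) : f * ((u - s) * (s * u + y * y)) =
  s * (f * (u * u - y * y)) + (y * y - s * s) * (f * u).
Proof. exact: (idG (Cring_th C)). Qed.
Lemma idSqC (I u y : C) : I * I = - 1 ->
  (u - I * y) * (u - I * y) = (u * u - y * y) + I * (- (u * y + u * y)).
Proof. exact: (idSq (Cring_th C)). Qed.
Lemma idFIC (f a b I : C) : f * (a + I * b) = f * a + I * (f * b).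
Proof. exact: (idFI (Cring_th C)). Qed.
Lemma idBC (f u y : C) : f * (u * y + u * y) = (y + y) * (f * u).
Proof. exact: (idB (Cring_th C)). Qed.
Lemma idDiskC (x a b h y : C) : h + h = 1 ->
  (x - (a + b) * h) * (x - (a + b) * h) + y * y =
  ((x - a) * (x - b) + y * y) + ((b - a) * h) * ((b - a) * h).
Proof. exact: (idDisk (Cring_th C)). Qed.
Lemma idRectC (x y p I : C) : x + I * y - p = (x - p) + I * y.
Proof. exact: (idRect (Cring_th C)). Qed.
Lemma idWC (c r r' : C) : (r + c * r') * r - r' * (c * r) = r * r.
Proof. exact: (idW (Cring_th C)). Qed.
End Spec.

Lemma bump_lt k i j : (j < k.-1)%N -> (bump i j < k)%N.
Proof.
move=> Hj; rewrite /bump; case: (i <= j)%N => /=.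
- by rewrite add1n; case: k Hj => //= k.
- by rewrite add0n; apply: (leq_trans Hj); exact: leq_pred.
Qed.

Lemma unbump_lt k i m : (m < k)%N -> (i < k)%N -> m != i -> (unbump i m < k.-1)%N.
Proof.
move=> Hm Hi Hmi; rewrite /unbump; case: (ltnP i m) => Him /=.
- by case: m Hm Him {Hmi} => // m Hm _; rewrite subn1 /=; case: k Hm Hi.
- rewrite ?subn0; have Hlt : (m < i)%N by rewrite ltn_neqAle Hmi Him.
  by case: k Hm Hi => // k Hm Hi /=; exact: (leq_trans Hlt).
Qed.

Lemma prod_split (R : comNzRingType) k (F : nat -> R) i : (i < k)%N ->
  \prod_(l < k) F l = F i * \prod_(j < k.-1) F (bump i j).
Proof. by move=> Hi; rewrite (bigD1_ord (Ordinal Hi)) //=. Qed.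

Lemma prod_other (R : comNzRingType) k (F : nat -> R) i m : (m < k)%N -> (i < k)%N -> m != i ->
  F m = 0 -> \prod_(j < k.-1) F (bump i j) = 0.
Proof.
move=> Hm Hi Hmi H0; rewrite (bigD1 (Ordinal (unbump_lt _ _ _ Hm Hi Hmi))) //=.
by rewrite unbumpK ?inE // H0 mul0r.
Qed.

Lemma sum_pos (C : numDomainType) k (F : nat -> C) i0 : (i0 < k)%N ->
  (forall i, (i < k)%N -> 0 <= F i) -> 0 < F i0 -> 0 < \sum_(i < k) F i.
Proof.
move=> Hi0 Hge Hgt; rewrite (bigD1 (Ordinal Hi0)) //=.
apply: (lt_le_trans Hgt); rewrite lerDl; apply: sumr_ge0 => i _; exact: Hge.
Qed.

Lemma geom (C : numClosedFieldType) k (P e : nat -> C) (z : C) :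
  (1 < k)%N -> (forall i, (i < k)%N -> P i \is Num.real) ->
  (forall i j, (i < j)%N -> (j < k)%N -> P i < P j) ->
  (forall i, (i < k)%N -> 0 < e i) ->
  \sum_(i < k) e i * (\prod_(j < k.-1) (z - P (bump i j))) ^+ 2 = 0 ->
  in_closed_diam_disk (P 0%N) (P k.-1) z /\
  (forall j, (j < k.-1)%N -> ~ in_open_diam_disk (P j) (P j.+1) z).
Proof.
move=> Hk Preal Pinc epos Hsum.
have Hk0 : (0 < k)%N by apply: ltnW.
have Ple : forall i j, (i <= j)%N -> (j < k)%N -> P i <= P j.
  move=> i j; rewrite leq_eqVlt => /orP [/eqP -> //|Hij Hj]; exact/ltW/Pinc.
have Pneq : forall i j, (i < k)%N -> (j < k)%N -> i != j -> P i != P j.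
  move=> i j Hi Hj; rewrite neq_ltn => /orP [H|H].
  - by rewrite lt_eqF // Pinc.
  - by rewrite gt_eqF // Pinc.
have vnz : forall i, (i < k)%N -> z - P i != 0.
  move=> m Hm; apply/negP; rewrite subr_eq0 => /eqP Hz.
  move: Hsum; rewrite (bigD1 (Ordinal Hm)) //= [X in _ + X]big1.
  - rewrite addr0; apply/eqP; apply: mulf_neq0; first by rewrite gt_eqF // epos.
    apply: expf_neq0; rewrite prodf_seq_neq0; apply/allP => j _ /=.
    by rewrite Hz subr_eq0 Pneq ?neq_bump //; apply: bump_lt.
  - move=> i Hi; rewrite (prod_other _ _ (fun l => z - P l) i m) ?expr0n ?mulr0 ?ltn_ord //.
    + by rewrite eq_sym; exact: Hi.
    + by rewrite Hz subrr.
have [x [y [xr [yr Hz]]]] : exists x y, x \is Num.real /\ y \is Num.real /\ z = x + 'i * y.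
  by exists ('Re z), ('Im z); rewrite Creal_Re Creal_Im -Crect.
subst z.
pose u i := x - P i.
have ur : forall i, (i < k)%N -> u i \is Num.real.
  by move=> i Hi; rewrite rpredB // Preal.
have Hv : forall i, x + 'i * y - P i = u i + 'i * y.
  by move=> i; exact: idRectC.
set z := x + 'i * y in vnz Hsum Hv *.
pose R0 := \prod_(l < k) (z - P l).
have R0nz : R0 != 0.
  by rewrite prodf_seq_neq0; apply/allP => l _ /=; apply: vnz.
have Hr : forall i : 'I_k, \prod_(j < k.-1) (z - P (bump i j)) = R0 / (z - P i).
  move=> i; rewrite /R0 (prod_split _ _ (fun l => z - P l) _ (ltn_ord i)).
  by rewrite mulrAC mulfV ?mul1r // vnz.
have HT : \sum_(i < k) e i * ((z - P i)^-1) ^+ 2 = 0.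
  have : R0 ^+ 2 * \sum_(i < k) e i * ((z - P i)^-1) ^+ 2 = 0.
    rewrite mulr_sumr -[in RHS]Hsum; apply: eq_bigr => i _.
    by rewrite Hr exprMn mulrCA.
  by move/eqP; rewrite mulf_eq0 expf_eq0 (negbTE R0nz) andbF /= => /eqP.
pose f i := e i * (`|z - P i| ^- 2) ^+ 2.
have fpos : forall i, (i < k)%N -> 0 < f i.
  move=> i Hi; rewrite mulr_gt0 ?epos // exprn_gt0 // invr_gt0 exprn_gt0 //.
  by rewrite normr_gt0 vnz.
have freal : forall i, (i < k)%N -> f i \is Num.real.
  by move=> i Hi; apply: gtr0_real; apply: fpos.
have ii : 'i * 'i = - 1 :> C by rewrite -expr2 sqrCi.
pose A := \sum_(i < k) f i * (u i * u i - y * y).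
pose Bn := \sum_(i < k) f i * (- (u i * y + u i * y)).
have HAB : A + 'i * Bn = 0.
  rewrite -HT /A /Bn mulr_sumr -big_split; apply: eq_bigr => i _.
  have E1 : ((z - P i)^-1) ^+ 2 = (`|z - P i| ^- 2) ^+ 2 * ((z - P i)^*) ^+ 2.
    by rewrite invC_norm exprMn.
  have E2 : (z - P i)^* = u i - 'i * y by rewrite Hv conjC_rect ?ur ?ltn_ord.
  have E3 : e i * ((z - P i)^-1) ^+ 2 = f i * ((u i - 'i * y) * (u i - 'i * y)).
    by rewrite E1 E2 mulrA expr2.
  by rewrite E3 idSqC // idFIC.
have Areal : A \is Num.real.
  by apply: rpred_sum => i _; rewrite rpredM ?freal ?ltn_ord // rpredB // rpredM // ur.
have Breal : Bn \is Num.real.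
  by apply: rpred_sum => i _; rewrite rpredM ?freal ?ltn_ord // rpredN rpredD // rpredM // ur.
have Re0 : 'Re (0 : C) = 0 by apply/Creal_ReP; exact: rpred0.
have Im0 : 'Im (0 : C) = 0 by apply/Creal_ImP; exact: rpred0.
have A0 : A = 0 by have := congr1 (fun w => 'Re w) HAB; rewrite /= Re_rect // Re0.
have B0 : Bn = 0 by have := congr1 (fun w => 'Im w) HAB; rewrite /= Im_rect // Im0.
have uu : forall i, (i < k)%N -> u i * u i = `|u i| ^+ 2.
  by move=> i Hi; rewrite real_normK ?ur // expr2.
have yy0 : 0 <= y * y by rewrite -expr2 -real_normK // exprn_ge0.
have ule : forall i j, (i <= j)%N -> (j < k)%N -> u j <= u i.
  by move=> i j Hij Hj; rewrite lerD2l lerN2 Ple.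
have ult : forall i j, (i < j)%N -> (j < k)%N -> u j < u i.
  by move=> i j Hij Hj; rewrite ltrD2l ltrN2 Pinc.
have ynz : y != 0.
  apply/negP => /eqP y0.
  have : 0 < A.
    apply: (sum_pos _ _ (fun i => f i * (u i * u i - y * y)) 0%N) => //.
    - move=> i Hi; rewrite y0 mulr0 subr0 mulr_ge0 ?(ltW (fpos i Hi)) // uu //.
      exact: exprn_ge0.
    - rewrite y0 mulr0 subr0 mulr_gt0 ?fpos // uu // exprn_gt0 // normr_gt0.
      by have := vnz 0%N Hk0; rewrite Hv y0 mulr0 addr0.
  by rewrite A0 ltxx.
pose Bs := \sum_(i < k) f i * u i.
have Bs0 : Bs = 0.
  have : (y + y) * Bs = 0.
    rewrite /Bs mulr_sumr -[RHS]oppr0 -[in RHS]B0 /Bn -sumrN; apply: eq_bigr => i _.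
    by rewrite mulrN opprK idBC.
  move/eqP; rewrite mulf_eq0 -mulr2n mulrn_eq0 /= (negbTE ynz) /= => /eqP //.
have key : forall s, \sum_(i < k) f i * ((u i - s) * (s * u i + y * y)) = 0.
  move=> s; transitivity (\sum_(i < k) (s * (f i * (u i * u i - y * y)) + (y * y - s * s) * (f i * u i))).
    by apply: eq_bigr => i _; rewrite idGC.
  rewrite big_split -!mulr_sumr -/A -/Bs A0 Bs0 !mulr0; exact: addr0.
have normE : forall c, c \is Num.real -> `|z - c| ^+ 2 = (x - c) * (x - c) + y * y.
  by move=> c cr; rewrite /z idRectC normC2_rect ?rpredB // !expr2.
have hh : 2%:R^-1 + 2%:R^-1 = 1 :> C.
  by rewrite -mulr2n -[_ *+ 2]mulr_natr mulVf // pnatr_eq0.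
have h0 : 0 < 2%:R^-1 :> C by rewrite invr_gt0 ltr0n.
have Hk1 : (k.-1 < k)%N by rewrite prednK.
have Hk10 : (0 < k.-1)%N by rewrite -subn1 subn_gt0.
split.
- rewrite /in_closed_diam_disk.
  have ab : P 0%N < P k.-1 by apply: Pinc.
  have r0 : 0 <= (P k.-1 - P 0%N) / 2%:R by rewrite divr_ge0 // subr_ge0 ltW.
  rewrite -(ler_pXn2r (_ : (0 < 2)%N)) ?nnegrE ?normr_ge0 //.
  rewrite normE; last by rewrite rpredM ?rpredD ?rpredV ?Preal ?rpred_nat.
  rewrite [in X in _ <= X]expr2 idDiskC // -subr_le0 addrK.
  have Xr : (x - P 0%N) * (x - P k.-1) + y * y \is Num.real.
    by rewrite rpredD ?rpredM ?rpredB ?Preal.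
  rewrite real_leNgt ?rpred0 //; apply/negP => Xpos0.
  have Xpos : 0 < u 0%N * u k.-1 + y * y := Xpos0.
  have sr : u k.-1 \is Num.real by apply: ur.
  have [s0|s0] := boolP (0 <= u k.-1).
  + have : 0 < Bs.
      apply: (sum_pos _ _ (fun i => f i * u i) 0%N) => //.
      * move=> i Hi; rewrite mulr_ge0 ?(ltW (fpos i Hi)) //.
        apply: (le_trans s0); apply: ule => //; rewrite -ltnS prednK //.
      * rewrite mulr_gt0 ?fpos //; apply: (le_lt_trans s0); exact: ult.
    by rewrite Bs0 ltxx.
  + have sn : u k.-1 < 0 by rewrite real_ltNge ?rpred0.
    have : 0 < \sum_(i < k) f i * ((u i - u k.-1) * (u k.-1 * u i + y * y)).
      apply: (sum_pos _ _ (fun i => f i * ((u i - u k.-1) * (u k.-1 * u i + y * y))) 0%N) => //.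
      * move=> i Hi; rewrite mulr_ge0 ?(ltW (fpos i Hi)) // mulr_ge0 //.
          by rewrite subr_ge0 ule // -ltnS prednK.
        apply: (le_trans (ltW Xpos)); rewrite mulrC lerD2r (ler_nM2l sn).
        exact: ule.
      * rewrite mulr_gt0 ?fpos // mulr_gt0 //; first by rewrite subr_gt0 ult.
        by rewrite mulrC.
    by rewrite key ltxx.
- move=> j Hj; rewrite /in_open_diam_disk => Hin.
  have Hj1 : (j.+1 < k)%N by rewrite -ltnS prednK // in Hj.
  have Hj0 : (j < k)%N by apply: ltnW.
  have ab : P j < P j.+1 by apply: Pinc.
  have r0 : 0 <= (P j.+1 - P j) / 2%:R by rewrite divr_ge0 // subr_ge0 ltW.
  move: Hin; rewrite -(ltr_pXn2r (_ : (0 < 2)%N)) ?nnegrE ?normr_ge0 //.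
  rewrite normE; last by rewrite rpredM ?rpredD ?rpredV ?Preal ?rpred_nat.
  rewrite [in X in _ < X]expr2 idDiskC // -subr_lt0 addrK => Xneg0.
  have Xneg : u j * u j.+1 + y * y < 0 := Xneg0.
  have sr : u j.+1 \is Num.real by apply: ur.
  have sn : u j.+1 < 0.
    rewrite real_ltNge ?rpred0 //; apply/negP => s0.
    move: Xneg; apply/negP; rewrite -real_leNgt ?rpred0 ?rpredD ?rpredM ?rpredB ?Preal //.
    rewrite addr_ge0 // mulr_ge0 //; apply: (le_trans s0); exact/ltW/ult.
  have : 0 < \sum_(i < k) - (f i * ((u i - u j.+1) * (u j.+1 * u i + y * y))).
    apply: (sum_pos _ _ (fun i => - (f i * ((u i - u j.+1) * (u j.+1 * u i + y * y)))) j) => //.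
    * move=> i Hi; rewrite oppr_ge0 pmulr_rle0 ?fpos //.
      case: (leqP i j) => Hij.
      - apply: ltW; rewrite pmulr_rlt0; last first.
          by rewrite subr_gt0; apply: (lt_le_trans (ult _ _ (ltnSn j) Hj1)); apply: ule.
        apply: (le_lt_trans _ Xneg); rewrite [u j * _]mulrC lerD2r (ler_nM2l sn).
        exact: ule.
      - rewrite mulr_le0_ge0 //; first by rewrite subr_le0 ule.
        rewrite addr_ge0 // mulr_le0 //; first exact: ltW.
        by apply: (le_trans (ule _ _ Hij Hi)); apply: ltW.
    * rewrite oppr_gt0 pmulr_rlt0 ?fpos // pmulr_rlt0; first by rewrite mulrC.
      by rewrite subr_gt0 ult.
  by rewrite sumrN key oppr0 ltxx.
Qed.

Lemma size_prodX (R : numClosedFieldType) n (F : nat -> R) :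
  size (\prod_(j < n) ('X - (F j)%:P)) = n.+1.
Proof. by rewrite size_prod_XsubC [index_enum _]unlock -enumT size_enum_ord. Qed.

Lemma poly_prod (C : numClosedFieldType) (p : {poly C}) n (Rf : nat -> C) :
  size p = n.+1 -> (forall i j, (i < j)%N -> (j < n)%N -> Rf i < Rf j) ->
  (forall i, (i < n)%N -> root p (Rf i)) ->
  p = lead_coef p *: \prod_(i < n) ('X - (Rf i)%:P).
Proof.
move=> Hs Hinc Hroot.
pose rs := [seq Rf (val i) | i <- index_enum 'I_n].
have Hu : uniq rs.
  rewrite map_inj_uniq ?index_enum_uniq // => i j /= Hij; apply/val_inj.
  case: (ltngtP i j) => // H.
  - by move: (Hinc _ _ H (ltn_ord j)); rewrite Hij ltxx.
  - by move: (Hinc _ _ H (ltn_ord i)); rewrite Hij ltxx.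
have Hr : all (root p) rs.
  by apply/allP => w /mapP [i _ ->]; apply: (Hroot _ (ltn_ord i)).
have Hur : uniq_roots rs by rewrite uniq_rootsE.
have [q0 Hq0] := uniq_roots_prod_XsubC Hr Hur.
rewrite big_map in Hq0.
have {}Hq0 : p = q0 * \prod_(i < n) ('X - (Rf i)%:P) := Hq0.
have pnz : p != 0 by rewrite -size_poly_eq0 Hs.
have q0nz : q0 != 0 by apply: contraNneq pnz => q00; rewrite Hq0 q00 mul0r.
have Hmon : \prod_(i < n) ('X - (Rf i)%:P) \is monic by apply: monic_prod_XsubC.
have Hsz : size (\prod_(i < n) ('X - (Rf i)%:P)) = n.+1 by apply: size_prodX.
have Hsq : size q0 = 1%N.
  have := congr1 (fun r : {poly C} => size r) Hq0; rewrite size_mul ?(monic_neq0 Hmon) // Hsz Hs addnS /=.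
  by move/eqP; rewrite -add1n eqn_add2r => /eqP <-.
have Hc : q0 = (q0`_0)%:P by apply: size1_polyC; rewrite Hsq.
have -> : lead_coef p = q0`_0.
  by rewrite Hq0 lead_coefM (monicP Hmon) mulr1 {1}Hc lead_coefC.
by rewrite {1}Hq0 {1}Hc mul_polyC.
Qed.

Lemma W_scale_l (C : numClosedFieldType) (a : C) (p q : {poly C}) :
  wronskian (a *: p) q = a *: wronskian p q.
Proof. by rewrite /wronskian derivZ -scalerAl -scalerAr scalerBr. Qed.

Lemma W_scale_r (C : numClosedFieldType) (a : C) (p q : {poly C}) :
  wronskian p (a *: q) = a *: wronskian p q.
Proof. by rewrite /wronskian derivZ -scalerAl -scalerAr scalerBr. Qed.

Lemma W_sum_r (C : numClosedFieldType) n (p : {poly C}) (F : nat -> {poly C}) :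
  wronskian p (\sum_(i < n) F i) = \sum_(i < n) wronskian p (F i).
Proof.
rewrite /wronskian raddf_sum mulr_sumr mulr_suml -sumrB.
by apply: eq_bigr => i _.
Qed.

Lemma W_self (C : numClosedFieldType) (c : C) (r : {poly C}) :
  wronskian (('X - c%:P) * r) r = r ^+ 2.
Proof. by rewrite /wronskian derivM derivXsubC mul1r expr2 idWC. Qed.

Theorem theorem1 (C : numClosedFieldType) (k : nat) (p q : {poly C})
  (ps qs : seq C) :
  (2 <= k)%N ->
  p \is a polyOver Num.real -> q \is a polyOver Num.real ->
  size p = k.+1 -> size q = k ->
  size ps = k -> size qs = k.-1 ->
  all (fun x => x \is Num.real) ps -> all (fun x => x \is Num.real) qs ->
  (forall z : C, root p z = (z \in ps)) ->
  (forall z : C, root q z = (z \in qs)) ->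
  (forall i : nat, (i < k.-1)%N -> ps`_i < qs`_i /\ qs`_i < ps`_i.+1) ->
  forall z : C, root (wronskian p q) z -> Omega ps z.
Proof.
move=> Hk _ _ Hsp Hsq Hps Hqs Hpr Hqr Hroot Hqroot Hint z Hz.
pose P i := ps`_i. pose Q j := qs`_j.
have Hk0 : (0 < k)%N by apply: ltnW.
have ltpred : forall i, (i.+1 < k)%N -> (i < k.-1)%N.
  by move=> i H; rewrite -subn1 ltn_subRL add1n.
have Pinc : forall i j, (i < j)%N -> (j < k)%N -> P i < P j.
  suff H : forall d i, (i + d.+1 < k)%N -> P i < P (i + d.+1)%N.
    move=> i j Hij Hj; have := H (j - i.+1)%N i.
    by rewrite subnSK // (subnKC (ltnW Hij)) => /(_ Hj).
  elim=> [|d IH] i Hd.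
  - rewrite addn1 in Hd *; have [h1 h2] := Hint i (ltpred _ Hd).
    exact: lt_trans h1 h2.
  - apply: (lt_trans (IH i (ltnW _))); first by rewrite -addnS.
    have Hlt : (i + d.+1 < k.-1)%N by apply: ltpred; rewrite -addnS.
    have [h1 h2] := Hint _ Hlt; rewrite -addnS in h2.
    exact: lt_trans h1 h2.
have Qinc : forall i j, (i < j)%N -> (j < k.-1)%N -> Q i < Q j.
  suff H : forall d i, (i + d.+1 < k.-1)%N -> Q i < Q (i + d.+1)%N.
    move=> i j Hij Hj; have := H (j - i.+1)%N i.
    by rewrite subnSK // (subnKC (ltnW Hij)) => /(_ Hj).
  have Hq1 : forall i, (i.+1 < k.-1)%N -> Q i < Q i.+1.
    move=> i Hi; have [_ h1] := Hint i (ltnW Hi); have [h2 _] := Hint i.+1 Hi.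
    exact: lt_trans h1 h2.
  elim=> [|d IH] i Hd.
  - by rewrite addn1 in Hd *; apply: Hq1.
  - apply: (lt_trans (IH i (ltnW _))); first by rewrite -addnS.
    by rewrite [(i + d.+2)%N]addnS; apply: Hq1; rewrite -addnS.
have Preal : forall i, (i < k)%N -> P i \is Num.real.
  by move=> i Hi; move/(all_nthP 0): Hpr => /(_ i); rewrite Hps; apply.
have Pneq : forall i j, (i < k)%N -> (j < k)%N -> i != j -> P i != P j.
  move=> i j Hi Hj; rewrite neq_ltn => /orP [H|H].
  - by rewrite lt_eqF // Pinc.
  - by rewrite gt_eqF // Pinc.
have Proot : forall i, (i < k)%N -> root p (P i).
  by move=> i Hi; rewrite Hroot mem_nth // Hps.
have Qroot : forall i, (i < k.-1)%N -> root q (Q i).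
  by move=> i Hi; rewrite Hqroot mem_nth // Hqs.
have Hp := poly_prod _ _ _ _ Hsp Pinc Proot.
have Hsq' : size q = k.-1.+1 by rewrite prednK.
have Hq := poly_prod _ _ _ _ Hsq' Qinc Qroot.
set a := lead_coef p in Hp. set b := lead_coef q in Hq.
have anz : a != 0 by rewrite lead_coef_eq0 -size_poly_eq0 Hsp.
have bnz : b != 0 by rewrite lead_coef_eq0 -size_poly_eq0 Hsq; case: k Hk {Hk0 ltpred Pinc Qinc Preal Pneq Proot Qroot Hp Hq Hsq' Hint Hps Hqs Hsp Hsq}.
pose rr i := \prod_(j < k.-1) ('X - (P (bump i j))%:P).
pose e i := \prod_(j < k.-1) ((P i - Q j) / (P i - P (bump i j))).
have epos : forall i, (i < k)%N -> 0 < e i.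
  move=> i Hi; apply: prodr_gt0 => j _.
  have Hj := ltn_ord j.
  have Hj1 : (j.+1 < k)%N by rewrite -ltnS prednK // in Hj.
  have [h1 h2] := Hint j Hj.
  rewrite /bump; case: leqP => Hij /=.
  - rewrite add1n -mulrNN -invrN divr_gt0 // oppr_gt0 subr_lt0.
    + apply: (le_lt_trans _ h1); rewrite leq_eqVlt in Hij; case/orP: Hij => [/eqP -> //|Hij].
      exact: ltW (Pinc _ _ Hij (ltnW Hj1)).
    + exact: (le_lt_trans _ (Pinc _ _ (leq_ltn_trans Hij (ltnSn j)) Hj1)).
  - rewrite add0n divr_gt0 // subr_gt0.
    + apply: (lt_le_trans h2); rewrite leq_eqVlt in Hij; case/orP: Hij => [/eqP <- //|Hij].
      exact: ltW (Pinc _ _ Hij Hi).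
    + exact: Pinc _ _ Hij Hi.
have rr_other : forall i m, (i < k)%N -> (m < k)%N -> m != i -> (rr i).[P m] = 0.
  move=> i m Hi Hm Hmi; rewrite /rr horner_prod.
  under eq_bigr do rewrite hornerXsubC.
  by apply: (prod_other _ _ (fun l => P m - P l) i m) => //; rewrite subrr.
have rr_self : forall m, (m < k)%N -> e m * (rr m).[P m] = \prod_(j < k.-1) (P m - Q j).
  move=> m Hm; rewrite /rr /e horner_prod -big_split /=; apply: eq_bigr => j _.
  rewrite hornerXsubC divfK // subr_eq0 Pneq // ?neq_bump //; exact: bump_lt.
have Hqm : forall m, q.[P m] = b * \prod_(j < k.-1) (P m - Q j).
  move=> m; rewrite {1}Hq hornerZ horner_prod.
  by under eq_bigr do rewrite hornerXsubC.
have Lagr : q = b *: \sum_(i < k) e i *: rr i.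
  apply/eqP; rewrite -subr_eq0; apply/eqP.
  set D := q - _.
  apply/eqP; apply: contraT => Dnz.
  pose rs := [seq P (val i) | i <- index_enum 'I_k].
  have Hu : uniq rs.
    rewrite map_inj_uniq ?index_enum_uniq // => i j /= Hij; apply/val_inj.
    case: (eqVneq (val i) (val j)) => // Hne.
    by move: (Pneq _ _ (ltn_ord i) (ltn_ord j) Hne); rewrite Hij eqxx.
  have Hr : all (root D) rs.
    apply/allP => w /mapP [m _ ->]; rewrite /root /D hornerD hornerN hornerZ horner_sum.
    rewrite (bigD1 m) //= [\sum_(i < k | i != m) _]big1.
    - by rewrite addr0 hornerZ rr_self // Hqm subrr.
    - move=> i Hi; rewrite hornerZ rr_other ?mulr0 ?ltn_ord // eq_sym; exact: Hi.
  have := max_poly_roots Dnz Hr Hu.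
  rewrite size_map [index_enum _]unlock -enumT size_enum_ord ltnNge => /negP H; exfalso; apply: H.
  rewrite /D (leq_trans (size_polyD _ _)) // geq_max Hsq leqnn size_polyN /=.
  apply: (leq_trans (size_scale_leq _ _)).
  apply: (big_ind (fun r : {poly C} => (size r <= k)%N)).
  - by rewrite size_poly0.
  - by move=> r1 r2 H1 H2; rewrite (leq_trans (size_polyD _ _)) // geq_max H1 H2.
  - move=> i _; apply: (leq_trans (size_scale_leq _ _)).
    by rewrite /rr (size_prodX _ _ (fun j => P (bump i j))) prednK.
have RRsplit : forall i, (i < k)%N ->
    \prod_(l < k) ('X - (P l)%:P) = ('X - (P i)%:P) * rr i.
  by move=> i Hi; exact: (prod_split _ _ (fun l => 'X - (P l)%:P) i Hi).
have Wform : wronskian p q = (a * b) *: \sum_(i < k) e i *: (rr i) ^+ 2.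
  rewrite Hp Lagr W_scale_l W_scale_r (W_sum_r _ _ _ (fun i => e i *: rr i)) scalerA.
  congr (_ *: _); apply: eq_bigr => i _.
  by rewrite W_scale_r (RRsplit i (ltn_ord i)) W_self.
move: Hz; rewrite /root Wform hornerZ mulf_eq0 mulf_eq0 (negbTE anz) (negbTE bnz) /=.
rewrite horner_sum => /eqP Hsum.
have Hs2 : \sum_(i < k) e i * (\prod_(j < k.-1) (z - P (bump i j))) ^+ 2 = 0.
  rewrite -[RHS]Hsum; apply: eq_bigr => i _.
  rewrite hornerZ horner_exp /rr horner_prod.
  by under [in RHS]eq_bigr do rewrite hornerXsubC.
have [Hc Ho] := geom _ _ _ _ _ Hk Preal Pinc epos Hs2.
split.
- by rewrite -nth_last Hps.
- by rewrite Hps.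
Qed.
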